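(* Let $P=\{\mathbf{x}^{(\mathrm{p})}_i\}_{i=1}^{n_{\mathrm p}}$ and $U=\{\mathbf{x}^{(\mathrm{u})}_i\}_{i=1}^{n_{\mathrm u}}$ be finite sets of points in $\mathbb{R}^d$, let $\pi\in(0,1)$, $w_{\mathrm p}=\pi/n_{\mathrm p}$ and $w_{\mathrm u}=1/n_{\mathrm u}$. Let $P'\subseteq P$ and $U'\subseteq U$, not both empty. For a loss $\ell:\mathbb{R}\times\{-1,+1\}\to\mathbb{R}$ define $$\hat R_{\mathrm{nnPU}}(v;P',U')=\sum_{\mathbf{x}\in P'}w_{\mathrm p}\,\ell(v,+1)+\max\Bigl\{0,\ \sum_{\mathbf{x}\in U'}w_{\mathrm u}\,\ell(v,-1)-\sum_{\mathbf{x}\in P'}w_{\mathrm p}\,\ell(v,-1)\Bigr\},$$ and $\hat R^*_{\mathrm{nnPU}}(P',U')=\inf_{v\in\mathbb{R}}\hat R_{\mathrm{nnPU}}(v;P',U')$. Let $W_{\mathrm p}=|P'|w_{\mathrm p}$, $W_{\mathrm n}=|U'|w_{\mathrm u}-|P'|w_{\mathrm p}$, and $v^*=\frac{W_{\mathrm p}}{W_{\mathrm p}+W_{\mathrm n}}$, where $v^*=+\infty$ if $W_{\mathrm p}+W_{\mathrm n}=0$. (a) For the quadratic loss $\ell(v,y)=(1-vy)^2$: $$\hat R^*_{\mathrm{nnPU}}(P',U')=\begin{cases}0,& v^*>1,\\ 4(W_{\mathrm p}+W_{\mathrm n})\,v^*(1-v^* ),&\text{otherwise.}\end{cases}$$ (b)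 For the logistic loss $\ell(v,y)=\ln(1+\exp(-vy))$: $$\hat R^*_{\mathrm{nnPU}}(P',U')=\begin{cases}(W_{\mathrm p}+W_{\mathrm n})\bigl(-v^*\ln v^*-(1-v^* )\ln(1-v^* )\bigr),& 0<v^*<1,\\ 0,&\text{otherwise.}\end{cases}$$
   Context: This is the non-negative PU (nnPU) risk estimate restricted to a decision-tree node containing positive examples $P'$ and unlabeled examples $U'$, when a constant score $v$ is predicted at that node. The value $v^*=+\infty$ counts as $v^*>1$. *)

(* Defs.v *)
From HB Require Import structures.
From mathcomp Require Import all_boot all_order all_algebra.
From mathcomp Require Import all_classical all_reals all_analysis.
Set Implicit Arguments. Unset Strict Implicit. Unset Printing Implicit Defensive.
Import Order.TTheory GRing.Theory Num.Theory.
Local Open Scope ring_scope.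
Local Open Scope classical_set_scope.

(* Losses l(v, y), with the label y in {-1,+1} encoded as a real (1 or -1). *)
Definition quad_loss (R : realType) (v y : R) : R := (1 - v * y) ^+ 2.
Definition logistic_loss (R : realType) (v y : R) : R := ln (1 + expR (- (v * y))).

Definition nnPU_risk (R : realType) (loss : R -> R -> R) (pi : R)
  (np nu : nat) (P' : {set 'I_np}) (U' : {set 'I_nu}) (v : R) : R :=
  let wp := pi / np%:R in let wu := 1 / nu%:R in
  \sum_(i in P') wp * loss v 1
  + Num.max 0 (\sum_(i in U') wu * loss v (-1) - \sum_(i in P') wp * loss v (-1)).

Definition nnPU_opt (R : realType) (loss : R -> R -> R) (pi : R)
  (np nu : nat) (P' : {set 'I_np}) (U' : {set 'I_nu}) : R :=
  inf [set nnPU_risk loss pi P' U' v | v in [set: R]].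

Definition Wp (R : realType) (pi : R) (np : nat) (P' : {set 'I_np}) : R :=
  #|P'|%:R * (pi / np%:R).
Definition Wn (R : realType) (pi : R) (np nu : nat)
  (P' : {set 'I_np}) (U' : {set 'I_nu}) : R :=
  #|U'|%:R * (1 / nu%:R) - #|P'|%:R * (pi / np%:R).

Definition vstar (R : realType) (pi : R) (np nu : nat)
  (P' : {set 'I_np}) (U' : {set 'I_nu}) : \bar R :=
  let s := Wp pi P' + Wn pi P' U' in
  if s == 0 then +oo%E else (Wp pi P' / s)%:E.

(* Main.v *)
Require Import Defs.
From HB Require Import structures.
From mathcomp Require Import all_boot all_order all_algebra.
From mathcomp Require Import all_classical all_reals all_analysis.
From mathcomp Require Import ring lra.
Import Order.TTheory GRing.Theory Num.Theory.
Local Open Scope ring_scope.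

Lemma inf_char (R : realType) (f : R -> R) m :
  (forall v, m <= f v) -> (forall e, 0 < e -> exists v, f v < m + e) ->
  inf [set f v | v in [set: R]] = m.
Proof.
move=> lb ap; apply/eqP; rewrite eq_le; apply/andP; split; last first.
  apply: lb_le_inf; first by exists (f 0); exists 0.
  by move=> _ [v _ <-].
rewrite leNgt; apply/negP => hm.
have := ap (inf [set f v | v in [set: R]] - m); rewrite subr_gt0 => /(_ hm) [v hv].
have : inf [set f v | v in [set: R]] <= f v.
  apply: ge_inf; last by exists v.
  by exists m => _ [w _ <-].
move: hv; rewrite addrC subrK => hv; by rewrite leNgt hv.
Qed.

Lemma risk_eq (R : realType) loss (pi : R) np nu (P' : {set 'I_np}) (U' : {set 'I_nu}) v :
  nnPU_risk loss pi P' U' v =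
  Wp pi P' * loss v 1 + Num.max 0 ((#|U'|%:R * (1 / nu%:R)) * loss v (-1) - Wp pi P' * loss v (-1)).
Proof. by rewrite /nnPU_risk /Wp !sumr_const -!mulrA !mulr_natl. Qed.

Lemma ln_ge_1subV (R : realType) (y : R) : 0 < y -> 1 - y^-1 <= ln y.
Proof.
move=> y0; have := @le_ln1Dx R (y^-1 - 1).
rewrite addrCA subrr addr0 lnV ?posrE // => h.
have : -1 < y^-1 - 1 by rewrite ltrBrDr addNr invr_gt0.
move/h; lra.
Qed.

Definition vs' {R : realType} (a c : R) : \bar R :=
  if c == 0 then +oo%E else (a / c)%:E.

Lemma quad_core (R : realType) (f : R -> R) (a c : R) : 0 <= a -> 0 <= c ->
  (forall v, f v = a * (1 - v)^+2 + Num.max 0 (c * (1 + v)^+2 - a * (1 + v)^+2)) ->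
  inf [set f v | v in [set: R]] =
  if (1%:E < (vs' a c))%E then 0
  else 4 * c * fine (vs' a c)
         * (1 - fine (vs' a c)).
Proof.
move=> a0 c0 hf.
have zero_case : c <= a -> inf [set f v | v in [set: R]] = 0.
  move=> ca; apply: inf_char => [v|e e0].
    rewrite hf; apply: addr_ge0; first by apply: mulr_ge0 => //; apply: sqr_ge0.
    by rewrite le_max lexx.
  exists 1; rewrite hf subrr expr0n /= mulr0 add0r.
  have -> : Num.max 0 (c * (1 + 1) ^+ 2 - a * (1 + 1) ^+ 2) = 0.
    apply/max_idPl; rewrite -mulrBl; apply: mulr_le0_ge0; first by lra.
    exact: sqr_ge0.
  lra.
rewrite /vs'.
have [ce|cn0] := eqVneq c 0.
  by rewrite ce ?eqxx ?ltry zero_case // ce.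
have cp : 0 < c by rewrite lt_neqAle eq_sym cn0.
rewrite /= lte_fin ltr_pdivlMr // mul1r /=.
have [ac|ca] := ltrP c a; first by rewrite zero_case // ltW.
apply: inf_char => [v|e e0].
  rewrite hf; apply: (@le_trans _ _ (a * (1 - v) ^+ 2 + (c * (1 + v) ^+ 2 - a * (1 + v) ^+ 2))).
    rewrite -subr_ge0.
    have -> : a * (1 - v) ^+ 2 + (c * (1 + v) ^+ 2 - a * (1 + v) ^+ 2) - 4 * c * (a / c) * (1 - a / c)
      = (c * (1 + v) - 2 * a) ^+ 2 / c by field.
    by apply: divr_ge0; [apply: sqr_ge0 | apply: ltW].
  by rewrite lerD2l le_max lexx orbT.
exists (2 * a / c - 1); rewrite hf.
have -> : Num.max 0 (c * (1 + (2 * a / c - 1)) ^+ 2 - a * (1 + (2 * a / c - 1)) ^+ 2)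
   = (c - a) * (1 + (2 * a / c - 1)) ^+ 2.
  rewrite mulrBl; apply/max_idPr; rewrite -mulrBl; apply: mulr_ge0; first by lra.
  exact: sqr_ge0.
have -> : a * (1 - (2 * a / c - 1)) ^+ 2 + (c - a) * (1 + (2 * a / c - 1)) ^+ 2
  = 4 * c * (a / c) * (1 - a / c) by field.
lra.
Qed.

Lemma log_core (R : realType) (f : R -> R) (a c : R) : 0 <= a -> 0 <= c ->
  (forall v, f v = a * ln (1 + expR (- v)) + Num.max 0 (c * ln (1 + expR v) - a * ln (1 + expR v))) ->
  inf [set f v | v in [set: R]] =
  if (0%:E < vs' a c)%E && (vs' a c < 1%:E)%E then
    c * (- fine (vs' a c) * ln (fine (vs' a c)) - (1 - fine (vs' a c)) * ln (1 - fine (vs' a c)))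
  else 0.
Proof.
move=> a0 c0 hf.
have lg0 : forall x : R, 0 <= ln (1 + expR x).
  by move=> x; apply: ln_ge0; rewrite lerDl expR_ge0.
have lb0 : forall v, 0 <= f v.
  move=> v; rewrite hf; apply: addr_ge0; first exact: mulr_ge0.
  by rewrite le_max lexx.
have case1 : c <= a -> inf [set f v | v in [set: R]] = 0.
  move=> ca; apply: inf_char => // e e0.
  have ep : 0 < (a + 1) / e by apply: divr_gt0 => //; lra.
  exists (ln ((a + 1) / e)); rewrite hf.
  have -> : Num.max 0 (c * ln (1 + expR (ln ((a + 1) / e))) - a * ln (1 + expR (ln ((a + 1) / e)))) = 0.
    apply/max_idPl; rewrite -mulrBl; apply: mulr_le0_ge0 => //; lra.
  rewrite expRN lnK ?posrE // invf_div addr0.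
  have hle : ln (1 + e / (a + 1)) <= e / (a + 1).
    apply: le_ln1Dx; have : 0 < e / (a + 1) by apply: divr_gt0 => //; lra.
    lra.
  have := ler_wpM2l a0 hle.
  have : e - a * (e / (a + 1)) = e / (a + 1) by field; lra.
  have : 0 < e / (a + 1) by apply: divr_gt0 => //; lra.
  lra.
have case2 : a = 0 -> inf [set f v | v in [set: R]] = 0.
  move=> a00; apply: inf_char => // e e0.
  have ep : 0 < e / (c + 1) by apply: divr_gt0 => //; lra.
  exists (ln (e / (c + 1))); rewrite hf a00 !mul0r subr0 add0r.
  rewrite lnK ?posrE //.
  have -> : Num.max 0 (c * ln (1 + e / (c + 1))) = c * ln (1 + e / (c + 1)).
    by apply/max_idPr; apply: mulr_ge0 => //; apply: ln_ge0; lra.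
  have hle : ln (1 + e / (c + 1)) <= e / (c + 1).
    by apply: le_ln1Dx; lra.
  have := ler_wpM2l c0 hle.
  have : e - c * (e / (c + 1)) = e / (c + 1) by field; lra.
  lra.
rewrite /vs'.
have [ce|cn0] := eqVneq c 0.
  by rewrite [X in _ && X]ltNge leey andbF case1 // ce.
have cp : 0 < c by rewrite lt_neqAle eq_sym cn0.
rewrite /= !lte_fin.
have [ae|an0] := eqVneq a 0.
  by rewrite ae mul0r ltxx /= case2.
have ap : 0 < a by rewrite lt_neqAle eq_sym an0.
have [ca|ac] := lerP c a.
  by rewrite [X in _ && X]ltr_pdivrMr // mul1r (ltNge a c) ca andbF case1.
rewrite ltr_pdivrMr // mul1r ac divr_gt0 //=.
set p := a / c.
have pp : 0 < p by apply: divr_gt0.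
have p1 : 0 < 1 - p by rewrite subr_gt0 /p ltr_pdivrMr // mul1r.
have hT : c * (- p * ln p - (1 - p) * ln (1 - p)) = - a * ln p - (c - a) * ln (1 - p).
  by rewrite /p; field; lra.
rewrite hT; apply: inf_char => [v|e e0].
  rewrite hf.
  have -> : Num.max 0 (c * ln (1 + expR v) - a * ln (1 + expR v)) = (c - a) * ln (1 + expR v).
    by rewrite mulrBl; apply/max_idPr; rewrite -mulrBl; apply: mulr_ge0 => //; lra.
  have xp := expR_gt0 v.
  have Ap : 0 < 1 + expR (- v) by have := expR_gt0 (- v); lra.
  have Bp : 0 < 1 + expR v by lra.
  have h1 := @ln_ge_1subV _ _ (mulr_gt0 pp Ap).
  have h2 := @ln_ge_1subV _ _ (mulr_gt0 p1 Bp).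
  rewrite lnM ?posrE // in h1; rewrite lnM ?posrE // in h2.
  have k1 := ler_wpM2l a0 h1.
  have ca0 : 0 <= c - a by lra.
  have k2 := ler_wpM2l ca0 h2.
  have e1 : a * (p * (1 + expR (- v)))^-1 + (c - a) * ((1 - p) * (1 + expR v))^-1 = c.
    rewrite expRN /p; field.
    by rewrite cn0 an0 (gt_eqF Bp) (gt_eqF xp) subr_eq0 (gt_eqF ac).
  lra.
have xp : 0 < a / (c - a) by apply: divr_gt0 => //; lra.
exists (ln (a / (c - a))); rewrite hf expRN lnK ?posrE //.
have eA : 1 + (a / (c - a))^-1 = p^-1.
  rewrite /p; field; by rewrite cn0 an0 subr_eq0 (gt_eqF ac).
have eB : 1 + a / (c - a) = (1 - p)^-1.
  rewrite /p; field; by rewrite cn0 subr_eq0 (gt_eqF ac).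
rewrite eA eB !lnV ?posrE //.
have -> : Num.max 0 (c * - ln (1 - p) - a * - ln (1 - p)) = (c - a) * - ln (1 - p).
  rewrite mulrBl; apply/max_idPr; rewrite -mulrBl; apply: mulr_ge0; first lra.
  rewrite oppr_ge0; apply: ln_le0; lra.
lra.
Qed.

Theorem proposition2 (R : realType) (d np nu : nat)
  (xp : 'I_np -> 'rV[R]_d) (xu : 'I_nu -> 'rV[R]_d)
  (xp_inj : injective xp) (xu_inj : injective xu)
  (pi : R) (hpi0 : 0 < pi) (hpi1 : pi < 1)
  (P' : {set 'I_np}) (U' : {set 'I_nu})
  (hne : P' != finset.set0 \/ U' != finset.set0) :
  let W := Wp pi P' + Wn pi P' U' in
  let vs := vstar pi P' U' in
  (nnPU_opt (@quad_loss R) pi P' U' =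
     if (1%:E < vs)%E then 0
     else 4 * W * fine vs * (1 - fine vs))
  /\
  (nnPU_opt (@logistic_loss R) pi P' U' =
     if (0%:E < vs)%E && (vs < 1%:E)%E then
       W * (- fine vs * ln (fine vs) - (1 - fine vs) * ln (1 - fine vs))
     else 0).
Proof.
move=> W vs.
set a := Wp pi P'.
pose c : R := #|U'|%:R * (1 / nu%:R).
have a0 : 0 <= a by rewrite /a /Wp; apply: mulr_ge0 => //; apply: divr_ge0 => //; lra.
have c0 : 0 <= c by apply: mulr_ge0 => //; apply: divr_ge0.
have hW : W = c by rewrite /W /Wn /a /c /Wp; ring.
have hvs : vs = vs' a c by rewrite /vs /vstar /= -/W hW.
rewrite hvs hW; split.
  rewrite /nnPU_opt; apply: quad_core => // v.
  by rewrite risk_eq /quad_loss -/a mulr1 mulrN1 opprK.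
rewrite /nnPU_opt; apply: log_core => // v.
by rewrite risk_eq /logistic_loss -/a mulr1 mulrN1 opprK.
Qed.
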